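(* Let $V$ be a near vector space over a commutative $F$ with finitely many blocks. Then the complete theory $\mathrm{Th}(V)$ of $V$ in the language $\mathcal L_{Fnvs}=\{+,0,(\lambda)_{\lambda\in F}\}$ admits quantifier elimination (equivalently in $\mathcal L_{\bar Fnvs}$, whose extra symbols are quantifier-free definable).
   Context: A near vector space $(V,F)$: $(V,+)$ a group, $F$ a set of endomorphisms containing $0,1,-1$, with $F\setminus\{0\}$ a subgroup of $\mathrm{Aut}(V,+)$ acting fixed point freely ($\alpha x=\beta x\Rightarrow\alpha=\beta$ or $x=0$), such that the quasi-kernel $Q(V)=\{u:\forall\alpha,\beta\in F\,\exists\gamma\in F\ \alpha u+\beta u=\gamma u\}$ generates $V$. Commutative: $\alpha(\beta v)=\beta(\alpha v)$ for all $\alpha,\beta\in F$, $v\in V$. The blocks of $V$ are the summands in André's decomposition of $V$ into maximal regular near vector subspaces (regular: any two nonzero quasi-kernel elements $u,v$ satisfy $u+\lambda v\in Q(V)$ for some $\lambda\neq0$), each nonzero element of $Q(V)$ lying in exactly one block; for commutative $F$ each block is a vector space over a field $(F,+_i,\circ)$. In $\mathcal L_{Fnvs}$ each $\lambda\in F$ is a unary function symbol interpreted as its action; $\bar F$ is the set of formal finite sums of elements of $F$ acting by pointwise sums, and $\mathcal L_{\bar Fnvs}=\{+,0,(\lambda)_{\lambda\in\bar F}\}$. *)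

(* Defs.v *)
From Stdlib Require Import List Arith.
Import ListNotations.
Set Implicit Arguments.

(* V is the carrier, K indexes the set F of endomorphisms (F = image of act). *)

Definition is_group {V : Type} (add : V -> V -> V) (zero : V) (opp : V -> V) : Prop :=
  (forall x y z, add x (add y z) = add (add x y) z) /\
  (forall x, add zero x = x /\ add x zero = x) /\
  (forall x, add (opp x) x = zero /\ add x (opp x) = zero).

Definition nonzero_map {V K : Type} (zero : V) (act : K -> V -> V) (a : K) : Prop :=
  act a <> (fun _ => zero).

Definition bijective_map {V : Type} (f : V -> V) : Prop :=
  (forall x y, f x = f y -> x = y) /\ (forall y, exists x, f x = y).

Definition quasi_kernel {V K : Type} (add : V -> V -> V) (act : K -> V -> V) (u : V) : Prop :=
  forall a b : K, exists c : K, add (act a u) (act b u) = act c u.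

Inductive generated {V : Type} (add : V -> V -> V) (zero : V) (opp : V -> V)
    (P : V -> Prop) : V -> Prop :=
  | gen_base : forall v, P v -> generated add zero opp P v
  | gen_zero : generated add zero opp P zero
  | gen_add : forall u v, generated add zero opp P u -> generated add zero opp P v ->
              generated add zero opp P (add u v)
  | gen_opp : forall u, generated add zero opp P u -> generated add zero opp P (opp u).

Definition is_near_vector_space {V K : Type} (add : V -> V -> V) (zero : V)
    (opp : V -> V) (act : K -> V -> V) : Prop :=
  is_group add zero opp /\
  (forall a x y, act a (add x y) = add (act a x) (act a y)) /\
  (exists a, forall x, act a x = zero) /\
  (exists a, forall x, act a x = x) /\
  (exists a, forall x, act a x = opp x) /\
  (* F \ {0} is a subgroup of Aut(V,+) *)
  (forall a, nonzero_map zero act a -> bijective_map (act a)) /\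
  (forall a b, nonzero_map zero act a -> nonzero_map zero act b ->
     exists c, forall x, act c x = act a (act b x)) /\
  (forall a, nonzero_map zero act a -> exists b, forall x, act b (act a x) = x) /\
  (forall a b x, act a x = act b x -> act a = act b \/ x = zero) /\
  (forall v, generated add zero opp (quasi_kernel add act) v).

Definition commutative_F {V K : Type} (act : K -> V -> V) : Prop :=
  forall a b v, act a (act b v) = act b (act a v).

Definition same_block {V K : Type} (add : V -> V -> V) (zero : V)
    (act : K -> V -> V) (u v : V) : Prop :=
  exists l, nonzero_map zero act l /\ quasi_kernel add act (add u (act l v)).

Definition finitely_many_blocks {V K : Type} (add : V -> V -> V) (zero : V)
    (act : K -> V -> V) : Prop :=
  exists us : list V,
    (forall u, In u us -> quasi_kernel add act u /\ u <> zero) /\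
    (forall q, quasi_kernel add act q -> q <> zero ->
       exists u, In u us /\ same_block add zero act q u).

Inductive term (K : Type) : Type :=
  | tvar : nat -> term K
  | tzero : term K
  | tadd : term K -> term K -> term K
  | tact : K -> term K -> term K.

Inductive formula (K : Type) : Type :=
  | fEq : term K -> term K -> formula K
  | fTrue : formula K
  | fFalse : formula K
  | fNot : formula K -> formula K
  | fAnd : formula K -> formula K -> formula K
  | fOr : formula K -> formula K -> formula K
  | fImp : formula K -> formula K -> formula K
  | fEx : nat -> formula K -> formula K
  | fAll : nat -> formula K -> formula K.

Arguments tzero {K}.
Arguments fTrue {K}.
Arguments fFalse {K}.

Fixpoint eval_term {V K : Type} (add : V -> V -> V) (zero : V) (act : K -> V -> V)
    (e : nat -> V) (t : term K) : V :=
  match t with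
  | tvar _ i => e i
  | tzero => zero
  | tadd t1 t2 => add (eval_term add zero act e t1) (eval_term add zero act e t2)
  | tact a t1 => act a (eval_term add zero act e t1)
  end.

Definition upd {V : Type} (e : nat -> V) (i : nat) (x : V) : nat -> V :=
  fun j => if Nat.eqb j i then x else e j.

Fixpoint holds {V K : Type} (add : V -> V -> V) (zero : V) (act : K -> V -> V)
    (e : nat -> V) (f : formula K) : Prop :=
  match f with
  | fEq t1 t2 => eval_term add zero act e t1 = eval_term add zero act e t2
  | fTrue => True
  | fFalse => False
  | fNot g => ~ holds add zero act e g
  | fAnd g h => holds add zero act e g /\ holds add zero act e h
  | fOr g h => holds add zero act e g \/ holds add zero act e h
  | fImp g h => holds add zero act e g -> holds add zero act e h
  | fEx i g => exists x, holds add zero act (upd e i x) g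
  | fAll i g => forall x, holds add zero act (upd e i x) g
  end.

Fixpoint quantifier_free {K : Type} (f : formula K) : Prop :=
  match f with
  | fEq _ _ | fTrue | fFalse => True
  | fNot g => quantifier_free g
  | fAnd g h | fOr g h | fImp g h => quantifier_free g /\ quantifier_free h
  | fEx _ _ | fAll _ _ => False
  end.

Fixpoint occurs_term {K : Type} (i : nat) (t : term K) : Prop :=
  match t with
  | tvar _ j => i = j
  | tzero => False
  | tadd t1 t2 => occurs_term i t1 \/ occurs_term i t2
  | tact _ t1 => occurs_term i t1
  end.

Fixpoint free_in {K : Type} (i : nat) (f : formula K) : Prop :=
  match f with
  | fEq t1 t2 => occurs_term i t1 \/ occurs_term i t2
  | fTrue | fFalse => False
  | fNot g => free_in i g
  | fAnd g h | fOr g h | fImp g h => free_in i g \/ free_in i h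
  | fEx j g | fAll j g => i <> j /\ free_in i g
  end.

(* Th(V) admits quantifier elimination: every formula is equivalent modulo Th(V)
   (i.e., since Th(V) is the complete theory of V, in V) to a quantifier-free
   formula with no new free variables. *)
Definition theory_has_QE {V K : Type} (add : V -> V -> V) (zero : V)
    (act : K -> V -> V) : Prop :=
  forall phi : formula K, exists psi : formula K,
    quantifier_free psi /\
    (forall i, free_in i psi -> free_in i phi) /\
    (forall e : nat -> V, holds add zero act e phi <-> holds add zero act e psi).

(* Main.v *)
Require Import Defs.
From Stdlib Require Import List Arith Lia Classical.
Import ListNotations.

Section Syntax.
Variables (V K : Type) (add : V -> V -> V) (zero : V) (act : K -> V -> V).

Notation ev := (eval_term add zero act).
Notation hd := (holds add zero act).

Lemma eval_coinc : forall t e1 e2, (forall i, occurs_term i t -> e1 i = e2 i) ->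
  ev e1 t = ev e2 t.
Proof.
  induction t; simpl; intros e1 e2 H; auto.
  - f_equal; [apply IHt1|apply IHt2]; intros; apply H; auto.
  - f_equal; apply IHt; auto.
Qed.

Lemma holds_coinc : forall phi e1 e2, (forall i, free_in i phi -> e1 i = e2 i) ->
  (hd e1 phi <-> hd e2 phi).
Proof.
  induction phi; simpl; intros e1 e2 H.
  - rewrite (eval_coinc t e1 e2), (eval_coinc t0 e1 e2); [tauto| |]; intros; apply H; auto.
  - tauto.
  - tauto.
  - rewrite (IHphi e1 e2); tauto.
  - rewrite (IHphi1 e1 e2), (IHphi2 e1 e2); try tauto; intros; apply H; auto.
  - rewrite (IHphi1 e1 e2), (IHphi2 e1 e2); try tauto; intros; apply H; auto.
  - rewrite (IHphi1 e1 e2), (IHphi2 e1 e2); try tauto; intros; apply H; auto.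
  - assert (Hx : forall x, hd (upd e1 n x) phi <-> hd (upd e2 n x) phi).
    { intro x; apply IHphi. intros i Hi; unfold upd; destruct (Nat.eqb i n) eqn:E; auto; apply H;
      apply Nat.eqb_neq in E; auto. }
    split; intros [x Hx']; exists x; apply Hx; auto.
  - assert (Hx : forall x, hd (upd e1 n x) phi <-> hd (upd e2 n x) phi).
    { intro x; apply IHphi. intros i Hi; unfold upd; destruct (Nat.eqb i n) eqn:E; auto; apply H;
      apply Nat.eqb_neq in E; auto. }
    split; intros Hx' x; apply Hx; auto.
Qed.

Fixpoint tsub0 (j : nat) (t : term K) : term K :=
  match t with
  | tvar _ i => if Nat.eqb i j then tzero else tvar K i
  | tzero => tzero
  | tadd t1 t2 => tadd (tsub0 j t1) (tsub0 j t2)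
  | tact a t1 => tact a (tsub0 j t1)
  end.

Fixpoint fsub0 (j : nat) (f : formula K) : formula K :=
  match f with
  | fEq t1 t2 => fEq (tsub0 j t1) (tsub0 j t2)
  | fTrue => fTrue
  | fFalse => fFalse
  | fNot g => fNot (fsub0 j g)
  | fAnd g h => fAnd (fsub0 j g) (fsub0 j h)
  | fOr g h => fOr (fsub0 j g) (fsub0 j h)
  | fImp g h => fImp (fsub0 j g) (fsub0 j h)
  | fEx i g => fEx i g
  | fAll i g => fAll i g
  end.

Lemma tsub0_eval : forall j t e, ev e (tsub0 j t) = ev (upd e j zero) t.
Proof.
  induction t; simpl; intros; auto.
  - unfold upd; destruct (Nat.eqb n j); reflexivity.
  - rewrite IHt1, IHt2; auto.
  - rewrite IHt; auto.
Qed.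

Lemma tsub0_occ : forall j t i, occurs_term i (tsub0 j t) -> occurs_term i t /\ i <> j.
Proof.
  induction t; simpl; intros i H; try tauto.
  - destruct (Nat.eqb n j) eqn:E; simpl in H; [tauto|].
    apply Nat.eqb_neq in E; subst; auto.
  - destruct H as [H|H]; [apply IHt1 in H|apply IHt2 in H]; tauto.
  - apply IHt in H; tauto.
Qed.

Lemma fsub0_holds : forall j f e, quantifier_free f ->
  (hd e (fsub0 j f) <-> hd (upd e j zero) f).
Proof.
  induction f; simpl; intros e Hq; try tauto.
  - rewrite !tsub0_eval; tauto.
  - rewrite IHf; tauto.
  - rewrite IHf1, IHf2; tauto.
  - rewrite IHf1, IHf2; tauto.
  - rewrite IHf1, IHf2; tauto.
Qed.

Lemma fsub0_qf : forall j f, quantifier_free f -> quantifier_free (fsub0 j f).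
Proof. induction f; simpl; tauto. Qed.

Lemma fsub0_free : forall j f i, quantifier_free f -> free_in i (fsub0 j f) -> free_in i f /\ i <> j.
Proof.
  induction f; simpl; intros i Hq H.
  - destruct H as [H|H]; apply tsub0_occ in H; tauto.
  - tauto.
  - tauto.
  - apply IHf; auto.
  - destruct H as [H|H]; [apply IHf1 in H|apply IHf2 in H]; tauto.
  - destruct H as [H|H]; [apply IHf1 in H|apply IHf2 in H]; tauto.
  - destruct H as [H|H]; [apply IHf1 in H|apply IHf2 in H]; tauto.
  - tauto.
  - tauto.
Qed.

Lemma term_fv_list : forall t : term K, exists L, forall i, occurs_term i t -> In i L.
Proof.
  induction t; simpl.
  - exists [n]; intros i H; subst; simpl; auto.
  - exists []; tauto.
  - destruct IHt1 as [L1 H1], IHt2 as [L2 H2]; exists (L1 ++ L2); intros i [H|H];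
    apply in_or_app; auto.
  - auto.
Qed.

Lemma formula_fv_list : forall f : formula K, exists L, forall i, free_in i f -> In i L.
Proof.
  induction f; simpl.
  - destruct (term_fv_list t) as [L1 H1], (term_fv_list t0) as [L2 H2]; exists (L1 ++ L2);
    intros i [H|H]; apply in_or_app; auto.
  - exists []; tauto.
  - exists []; tauto.
  - auto.
  - destruct IHf1 as [L1 H1], IHf2 as [L2 H2]; exists (L1 ++ L2);
    intros i [H|H]; apply in_or_app; auto.
  - destruct IHf1 as [L1 H1], IHf2 as [L2 H2]; exists (L1 ++ L2);
    intros i [H|H]; apply in_or_app; auto.
  - destruct IHf1 as [L1 H1], IHf2 as [L2 H2]; exists (L1 ++ L2);
    intros i [H|H]; apply in_or_app; auto.
  - destruct IHf as [L H]; exists L; intros i [_ Hi]; auto.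
  - destruct IHf as [L H]; exists L; intros i [_ Hi]; auto.
Qed.

Lemma cleanup : forall phi psi, quantifier_free psi ->
  (forall e, hd e phi <-> hd e psi) ->
  exists psi', quantifier_free psi' /\ (forall i, free_in i psi' -> free_in i phi) /\
    (forall e, hd e phi <-> hd e psi').
Proof.
  intros phi psi Hq Heq.
  destruct (formula_fv_list psi) as [L HL].
  assert (Hgen : forall L psi, quantifier_free psi -> (forall e, hd e phi <-> hd e psi) ->
     (forall i, free_in i psi -> In i L \/ free_in i phi) ->
     exists psi', quantifier_free psi' /\ (forall i, free_in i psi' -> free_in i phi) /\
    (forall e, hd e phi <-> hd e psi')).
  { clear. induction L as [|j L IH]; intros psi Hq Heq HL.
    - exists psi; split; [|split]; auto. intros i Hi; destruct (HL i Hi) as [[]|]; auto.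
    - destruct (classic (free_in j phi)) as [Hj|Hj].
      + apply (IH psi); auto. intros i Hi. destruct (HL i Hi) as [[H|H]|H]; subst; auto.
      + apply (IH (fsub0 j psi)); auto using fsub0_qf.
        * intros e. rewrite fsub0_holds by auto. rewrite <- Heq.
          apply holds_coinc. intros i Hi. unfold upd.
          destruct (Nat.eqb i j) eqn:E; auto. apply Nat.eqb_eq in E; subst; tauto.
        * intros i Hi. apply fsub0_free in Hi; auto. destruct Hi as [Hi Hne].
          destruct (HL i Hi) as [[H|H]|H]; auto. congruence. }
  apply (Hgen L psi); auto.
Qed.

Lemma qe_core : (forall x psi, quantifier_free psi -> exists psi', quantifier_free psi' /\
    forall e, (exists v, hd (upd e x v) psi) <-> hd e psi') ->
  forall phi, exists psi, quantifier_free psi /\ forall e, hd e phi <-> hd e psi.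
Proof.
  intros Helim. induction phi.
  - exists (fEq t t0); simpl; split; auto; tauto.
  - exists fTrue; simpl; split; auto; tauto.
  - exists fFalse; simpl; split; auto; tauto.
  - destruct IHphi as [p [H1 H2]]. exists (fNot p); simpl; split; auto. intros; rewrite H2; tauto.
  - destruct IHphi1 as [p [H1 H2]], IHphi2 as [q [H3 H4]]. exists (fAnd p q); simpl; split; auto.
    intros; rewrite H2, H4; tauto.
  - destruct IHphi1 as [p [H1 H2]], IHphi2 as [q [H3 H4]]. exists (fOr p q); simpl; split; auto.
    intros; rewrite H2, H4; tauto.
  - destruct IHphi1 as [p [H1 H2]], IHphi2 as [q [H3 H4]]. exists (fImp p q); simpl; split; auto.
    intros; rewrite H2, H4; tauto.
  - destruct IHphi as [p [H1 H2]]. destruct (Helim n p H1) as [p' [H3 H4]].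
    exists p'; split; auto. intros e; simpl. rewrite <- H4. split; intros [v Hv]; exists v; apply H2; auto.
  - destruct IHphi as [p [H1 H2]]. destruct (Helim n (fNot p) H1) as [p' [H3 H4]].
    exists (fNot p'); split; auto. intros e; simpl. rewrite <- H4. split.
    + intros H [v Hv]. apply Hv, H2, H.
    + intros H v. apply H2. apply NNPP; intro Hn. apply H. exists v; auto.
Qed.

End Syntax.

Section Alg.
Variables (V K : Type) (add : V -> V -> V) (zero : V) (opp : V -> V) (act : K -> V -> V).
Hypothesis assoc : forall x y z, add x (add y z) = add (add x y) z.
Hypothesis add0l : forall x, add zero x = x.
Hypothesis add0r : forall x, add x zero = x.
Hypothesis addNl : forall x, add (opp x) x = zero.
Hypothesis addNr : forall x, add x (opp x) = zero.
Hypothesis endo : forall a x y, act a (add x y) = add (act a x) (act a y).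
Variables (kz ko km : K).
Hypothesis Hkz : forall x, act kz x = zero.
Hypothesis Hko : forall x, act ko x = x.
Hypothesis Hkm : forall x, act km x = opp x.
Hypothesis Hcomp : forall a b, nonzero_map zero act a -> nonzero_map zero act b ->
     exists c, forall x, act c x = act a (act b x).
Hypothesis Hbij : forall a, nonzero_map zero act a -> bijective_map (act a).
Hypothesis Hinvex : forall a, nonzero_map zero act a -> exists b, forall x, act b (act a x) = x.
Hypothesis Hfpf : forall a b x, act a x = act b x -> act a = act b \/ x = zero.
Hypothesis Hgen : forall v, generated add zero opp (quasi_kernel add act) v.
Hypothesis Hcomm : commutative_F act.

Lemma opp_uniq : forall a b, add a b = zero -> b = opp a.
Proof.
  intros a b H. rewrite <- (add0l b), <- (addNl a), <- assoc, H, add0r; auto.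
Qed.

Lemma opp_opp : forall x, opp (opp x) = x.
Proof. intros; symmetry; apply opp_uniq; auto. Qed.

Lemma opp_add_rev : forall x y, opp (add x y) = add (opp y) (opp x).
Proof.
  intros; symmetry; apply opp_uniq.
  rewrite <- assoc, (assoc y), addNr, add0l; auto.
Qed.

Lemma addC : forall x y, add x y = add y x.
Proof.
  intros x y.
  assert (H : forall a b, add (opp b) (opp a) = add (opp a) (opp b)).
  { intros a b. rewrite <- opp_add_rev, <- !Hkm, endo; auto. }
  rewrite <- (opp_opp x), <- (opp_opp y). apply H.
Qed.

Lemma addCA : forall x y z, add x (add y z) = add y (add x z).
Proof. intros; rewrite !assoc, (addC x y); auto. Qed.

Lemma add4 : forall a b c d, add (add a b) (add c d) = add (add a c) (add b d).
Proof. intros; rewrite <- !assoc; f_equal; apply addCA. Qed.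

Lemma add_cancel_l : forall x y z, add x y = add x z -> y = z.
Proof.
  intros x y z H. rewrite <- (add0l y), <- (add0l z), <- (addNl x), <- !assoc, H; auto.
Qed.

Lemma sub_eq : forall x y, add x (opp y) = zero -> x = y.
Proof.
  intros x y H. apply opp_uniq in H. rewrite <- (opp_opp y), H, opp_opp; auto.
Qed.

Lemma opp_zero : opp zero = zero.
Proof. symmetry; apply opp_uniq; auto. Qed.

Lemma opp_add : forall x y, opp (add x y) = add (opp x) (opp y).
Proof. intros; rewrite opp_add_rev, addC; auto. Qed.

Lemma act_zero : forall a, act a zero = zero.
Proof.
  intros a. apply (add_cancel_l (act a zero)). rewrite <- endo, !add0r; auto.
Qed.

Lemma act_opp : forall a x, act a (opp x) = opp (act a x).
Proof.
  intros; apply opp_uniq. rewrite <- endo, addNr, act_zero; auto.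
Qed.

Definition additive (f : V -> V) := forall x y, f (add x y) = add (f x) (f y).

Lemma additive_zero : forall f, additive f -> f zero = zero.
Proof.
  intros f Hf. apply (add_cancel_l (f zero)). rewrite <- Hf, !add0r; auto.
Qed.

Lemma additive_opp : forall f, additive f -> forall x, f (opp x) = opp (f x).
Proof.
  intros f Hf x; apply opp_uniq. rewrite <- Hf, addNr, additive_zero; auto.
Qed.

Lemma extension : forall f g, additive f -> additive g ->
  (forall q, quasi_kernel add act q -> f q = g q) -> forall v, f v = g v.
Proof.
  intros f g Hf Hg H v. induction (Hgen v).
  - auto.
  - rewrite !additive_zero; auto.
  - rewrite Hf, Hg; congruence.
  - rewrite (additive_opp f), (additive_opp g); congruence.
Qed.

Definition ev1 (t : term K) (v : V) : V := eval_term add zero act (fun _ => v) t.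

Lemma eval_add_env : forall t e1 e2,
  eval_term add zero act (fun j => add (e1 j) (e2 j)) t =
  add (eval_term add zero act e1 t) (eval_term add zero act e2 t).
Proof.
  induction t; simpl; intros; auto.
  - rewrite IHt1, IHt2, add4; auto.
  - rewrite IHt, endo; auto.
Qed.

Lemma eval_zero_env : forall t, eval_term add zero act (fun _ => zero) t = zero.
Proof.
  induction t; simpl; auto.
  - rewrite IHt1, IHt2; auto.
  - rewrite IHt, act_zero; auto.
Qed.

Lemma ev1_additive : forall t, additive (ev1 t).
Proof. intros t x y. unfold ev1. apply (eval_add_env t (fun _ => x) (fun _ => y)). Qed.

Lemma ev1_zero : forall t, ev1 t zero = zero.
Proof. intros; apply eval_zero_env. Qed.

Lemma ev1_opp : forall t x, ev1 t (opp x) = opp (ev1 t x).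
Proof. intros; apply additive_opp, ev1_additive. Qed.

Lemma ev1_act : forall t a v, act a (ev1 t v) = ev1 t (act a v).
Proof.
  induction t; simpl; intros; unfold ev1 in *; simpl; auto.
  - apply act_zero.
  - rewrite endo, IHt1, IHt2; auto.
  - rewrite <- IHt. apply Hcomm.
Qed.

Lemma ev1_comm : forall s t v, ev1 s (ev1 t v) = ev1 t (ev1 s v).
Proof.
  induction s; intros; unfold ev1 in *; simpl; auto.
  - symmetry; apply eval_zero_env.
  - rewrite IHs1, IHs2. symmetry; apply (eval_add_env t).
  - rewrite IHs. apply ev1_act.
Qed.

Fixpoint tsubst (f : nat -> term K) (t : term K) : term K :=
  match t with
  | tvar _ i => f i
  | tzero => tzero
  | tadd t1 t2 => tadd (tsubst f t1) (tsubst f t2)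
  | tact a t1 => tact a (tsubst f t1)
  end.

Lemma tsubst_eval : forall f t e, eval_term add zero act e (tsubst f t) =
  eval_term add zero act (fun j => eval_term add zero act e (f j)) t.
Proof. induction t; simpl; intros; auto; rewrite ?IHt1, ?IHt2, ?IHt; auto. Qed.

Definition app (s t : term K) : term K := tsubst (fun _ => t) s.

Lemma app_eval : forall s t e, eval_term add zero act e (app s t) = ev1 s (eval_term add zero act e t).
Proof. intros; unfold app; rewrite tsubst_eval; auto. Qed.

Lemma app_ev1 : forall s t v, ev1 (app s t) v = ev1 s (ev1 t v).
Proof. intros; unfold ev1 at 1; rewrite app_eval; auto. Qed.

Lemma ev1_tact : forall a t v, ev1 (tact a t) v = act a (ev1 t v).
Proof. reflexivity. Qed.

Definition Q := quasi_kernel add act.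
Definition nz := nonzero_map zero act.

Lemma not_nz : forall a, ~ nz a -> forall x, act a x = zero.
Proof.
  intros a H x. unfold nz, nonzero_map in H. apply NNPP in H. rewrite H; auto.
Qed.

Lemma S1 : forall u, Q u -> forall t, exists a, ev1 t u = act a u.
Proof.
  intros u Hu; induction t; unfold ev1 in *; simpl.
  - exists ko; auto.
  - exists kz; auto.
  - destruct IHt1 as [a Ha], IHt2 as [b Hb]. rewrite Ha, Hb. apply Hu.
  - destruct IHt as [a Ha]. rewrite Ha.
    destruct (classic (nz k)) as [H1|H1]; [destruct (classic (nz a)) as [H2|H2]|].
    + destruct (Hcomp k a H1 H2) as [c Hc]. exists c; auto.
    + exists kz. rewrite (not_nz a H2), act_zero, Hkz; auto.
    + exists kz. rewrite (not_nz k H1), Hkz; auto.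
Qed.

Lemma nz_inj : forall l x, nz l -> act l x = zero -> x = zero.
Proof.
  intros l x Hl H. destruct (Hbij l Hl) as [Hi _]. apply Hi. rewrite H, act_zero; auto.
Qed.


Lemma shuffle : forall A B C D, add A B = add C D -> add A (opp C) = add D (opp B).
Proof.
  intros A B C D H.
  assert (HA : A = add (add C D) (opp B)) by (rewrite <- H, <- assoc, addNr, add0r; auto).
  rewrite HA. rewrite (addC _ (opp C)), !assoc, addNl, add0l; auto.
Qed.

Lemma Q_act : forall l u, Q u -> Q (act l u).
Proof.
  intros l u Hu a b. destruct (Hu a b) as [c Hc]. exists c.
  rewrite (Hcomm a l), (Hcomm b l), <- endo, Hc, Hcomm; auto.
Qed.

Lemma Q_zero : Q zero.
Proof. intros a b; exists kz; rewrite !act_zero; auto. Qed.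

Lemma LemmaA : forall q u l t a b, Q q -> q <> zero -> Q u -> u <> zero -> nz l ->
  Q (add q (act l u)) -> ev1 t q = act a q -> ev1 t u = act b u -> act a = act b.
Proof.
  intros q u l t a b Hq Hq0 Hu Hu0 Hl Hw Ha Hb.
  set (u' := act l u) in *.
  assert (Hu'0 : u' <> zero) by (intro E; apply Hu0; apply (nz_inj l); auto).
  assert (HQu' : Q u') by (apply Q_act; auto).
  assert (Hbu' : ev1 t u' = act b u') by (unfold u'; rewrite <- ev1_act, Hb, Hcomm; auto).
  destruct (S1 _ Hw t) as [c Hc].
  rewrite ev1_additive, endo, Ha, Hbu' in Hc.
  apply shuffle in Hc.
  destruct (S1 _ Hq (tadd (tact a (tvar K 0)) (tact km (tact c (tvar K 0))))) as [al Hal].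
  destruct (S1 _ HQu' (tadd (tact c (tvar K 0)) (tact km (tact b (tvar K 0))))) as [be Hbe].
  unfold ev1 in Hal, Hbe; simpl in Hal, Hbe. rewrite !Hkm in Hal, Hbe.
  rewrite Hal, Hbe in Hc.
  destruct (classic (nz al)) as [Hnz|Hnz].
  - destruct (Hinvex al Hnz) as [al' Hal'].
    assert (Hqe : q = act al' (act be u')) by (rewrite <- Hc, Hal'; auto).
    assert (Htq : ev1 t q = act b q).
    { rewrite Hqe, <- !ev1_act, Hbu', (Hcomm be b), (Hcomm al' b); auto. }
    rewrite Ha in Htq. destruct (Hfpf _ _ _ Htq); tauto.
  - rewrite (not_nz al Hnz) in Hc, Hal.
    symmetry in Hc. rewrite Hc in Hbe.
    apply sub_eq in Hal. apply sub_eq in Hbe.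
    destruct (Hfpf _ _ _ Hal) as [E1|E1]; [|tauto].
    destruct (Hfpf _ _ _ Hbe) as [E2|E2]; [|tauto].
    congruence.
Qed.

Definition EqB (u v : V) := forall t a b, ev1 t u = act a u -> ev1 t v = act b v -> act a = act b.

Lemma EqB_sym : forall u v, EqB u v -> EqB v u.
Proof. intros u v H t a b H1 H2; symmetry; eapply H; eauto. Qed.

Lemma EqB_trans : forall u v w, Q v -> EqB u v -> EqB v w -> EqB u w.
Proof.
  intros u v w Hv H1 H2 t a b Ha Hb. destruct (S1 v Hv t) as [c Hc].
  transitivity (act c); [eapply H1|eapply H2]; eauto.
Qed.

Lemma transfer : forall q u t a, Q q -> EqB q u -> ev1 t u = act a u -> ev1 t q = act a q.
Proof.
  intros q u t a Hq H Ha. destruct (S1 q Hq t) as [c Hc]. rewrite Hc.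
  rewrite (H t c a); auto.
Qed.

Lemma sameblock_EqB : forall q u, Q q -> q <> zero -> Q u -> u <> zero ->
  same_block add zero act q u -> EqB q u.
Proof.
  intros q u Hq Hq0 Hu Hu0 [l [Hl Hw]] t a b Ha Hb. apply (LemmaA q u l t a b); auto.
Qed.

Lemma separation : forall u w, Q u -> u <> zero -> ~ EqB w u ->
  exists t, ev1 t u = u /\ ev1 t w = zero.
Proof.
  intros u w Hu Hu0 H. unfold EqB in H.
  apply not_all_ex_not in H; destruct H as [t H].
  apply not_all_ex_not in H; destruct H as [a H].
  apply not_all_ex_not in H; destruct H as [b H].
  apply imply_to_and in H; destruct H as [Ha H].
  apply imply_to_and in H; destruct H as [Hb Hab].
  set (t1 := tadd t (tact km (tact a (tvar K 0)))).
  assert (E1 : ev1 t1 w = zero) by (unfold t1, ev1 in *; simpl; rewrite Ha, Hkm, addNr; auto).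
  assert (E2 : ev1 t1 u = add (act b u) (opp (act a u))) by (unfold t1, ev1 in *; simpl; rewrite Hb, Hkm; auto).
  destruct (S1 u Hu t1) as [de Hde].
  assert (Hnz : nz de).
  { apply NNPP; intro Hn. rewrite (not_nz de Hn) in Hde. rewrite Hde in E2.
    symmetry in E2. apply sub_eq in E2. destruct (Hfpf _ _ _ E2); auto. }
  destruct (Hinvex de Hnz) as [de' Hde'].
  clearbody t1. exists (tact de' t1). rewrite !ev1_tact, E1, Hde, Hde', act_zero; auto.
Qed.

Lemma kill_list : forall u L, Q u -> u <> zero ->
  exists t, ev1 t u = u /\ forall w, In w L -> ~ EqB w u -> ev1 t w = zero.
Proof.
  intros u L Hu Hu0. induction L as [|w L IH].
  - exists (tvar K 0); split; [reflexivity|simpl; tauto].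
  - destruct IH as [t [Ht1 Ht2]].
    destruct (classic (EqB w u)) as [Hw|Hw].
    + exists t; split; auto. intros w' [<-|Hin] Hn; [tauto|auto].
    + destruct (separation u w Hu Hu0 Hw) as [s [Hs1 Hs2]].
      exists (app s t); split.
      * rewrite app_ev1, Ht1, Hs1; auto.
      * intros w' [<-|Hin] Hn; rewrite app_ev1.
        -- rewrite ev1_comm, Hs2, ev1_zero; auto.
        -- rewrite Ht2, ev1_zero; auto.
Qed.

Lemma EqB_refl : forall u, u <> zero -> EqB u u.
Proof. intros u Hu t a b Ha Hb. rewrite Ha in Hb. destruct (Hfpf _ _ _ Hb); tauto. Qed.

Definition PW (D : list V) := forall i j, i < length D -> j < length D -> i <> j ->
  ~ EqB (nth i D zero) (nth j D zero).

Lemma dedupe : forall L, (forall u, In u L -> Q u /\ u <> zero) ->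
  exists D, (forall d, In d D -> Q d /\ d <> zero) /\ (forall u, In u L -> exists d, In d D /\ EqB u d)
    /\ PW D.
Proof.
  induction L as [|u L IH]; intros HL.
  - exists []; split; [simpl; tauto|split; [simpl; tauto|]].
    intros i j Hi; simpl in Hi; lia.
  - destruct IH as [D [HD1 [HD2 HD3]]]; [intros; apply HL; simpl; auto|].
    destruct (classic (exists d, In d D /\ EqB u d)) as [Hex|Hnex].
    + exists D; split; auto; split; auto.
      intros w [<-|Hw]; auto.
    + assert (Hu : Q u /\ u <> zero) by (apply HL; simpl; auto).
      exists (u :: D); split; [|split].
      * intros d [<-|Hd]; auto.
      * intros w [<-|Hw]; [exists u; split; [simpl; auto|apply EqB_refl; tauto]|].
        destruct (HD2 w Hw) as [d [Hd1 Hd2]]; exists d; split; simpl; auto.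
      * intros [|i] [|j] Hi Hj Hij; simpl in *; [lia| | |].
        -- intro E; apply Hnex; exists (nth j D zero); split; auto. apply nth_In; lia.
        -- intro E; apply Hnex; exists (nth i D zero); split; [apply nth_In; lia|]. apply EqB_sym; auto.
        -- apply HD3; lia.
Qed.

Lemma build_list : forall (P : nat -> term K -> Prop) n, (forall i, i < n -> exists t, P i t) ->
  exists Es, length Es = n /\ forall i, i < n -> P i (nth i Es tzero).
Proof.
  intros P n. induction n as [|n IH]; intros H.
  - exists []; split; auto; intros; lia.
  - destruct IH as [Es [HL HP]]; [intros; apply H; lia|].
    destruct (H n) as [t Ht]; [lia|].
    exists (Es ++ [t]); split; [rewrite length_app; simpl; lia|].
    intros i Hi. destruct (Nat.eq_dec i n) as [->|Hne].
    + rewrite app_nth2 by lia. rewrite HL, Nat.sub_diag; simpl; auto.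
    + rewrite app_nth1 by lia. apply HP; lia.
Qed.

Lemma additive_zero_fun : additive (fun _ => zero).
Proof. intros x y; rewrite add0r; auto. Qed.

Lemma blocks_structure : forall us, (forall u, In u us -> Q u /\ u <> zero) ->
  (forall q, Q q -> q <> zero -> exists u, In u us /\ same_block add zero act q u) ->
  exists Es : list (term K),
   (forall i j v, i < length Es -> j < length Es ->
      ev1 (nth i Es tzero) (ev1 (nth j Es tzero) v) =
      if Nat.eqb i j then ev1 (nth i Es tzero) v else zero) /\
   (forall w, (forall i, i < length Es -> ev1 (nth i Es tzero) w = zero) -> w = zero) /\
   (forall rho i, i < length Es -> (forall v, ev1 (nth i Es tzero) (ev1 rho v) = zero) \/
      exists rho', forall v, ev1 rho' (ev1 rho (ev1 (nth i Es tzero) v)) = ev1 (nth i Es tzero) v).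
Proof.
  intros us Hus1 Hus2.
  destruct (dedupe us Hus1) as [D [HD1 [HD2 HD3]]].
  set (n := length D).
  assert (Hcov : forall q, Q q -> q <> zero -> exists d, In d D /\ EqB q d).
  { intros q Hq Hq0. destruct (Hus2 q Hq Hq0) as [u [Hu1 Hu2]].
    destruct (Hus1 u Hu1) as [HQu Hu0].
    destruct (HD2 u Hu1) as [d [Hd1 Hd2]]. exists d; split; auto.
    apply (EqB_trans q u d); auto. apply sameblock_EqB; auto. }
  assert (Hcovi : forall q, Q q -> q <> zero -> exists i, i < n /\ EqB q (nth i D zero)).
  { intros q Hq Hq0. destruct (Hcov q Hq Hq0) as [d [Hd1 Hd2]].
    destruct (In_nth D d zero Hd1) as [i [Hi1 Hi2]]. exists i; split; auto. rewrite Hi2; auto. }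
  set (P := fun i t => forall q, Q q -> q <> zero ->
     (EqB q (nth i D zero) -> ev1 t q = q) /\ (~ EqB q (nth i D zero) -> ev1 t q = zero)).
  destruct (build_list P n) as [Es [HEl HEP]].
  { intros i Hi. assert (Hdi : In (nth i D zero) D) by (apply nth_In; auto).
    destruct (HD1 _ Hdi) as [HQd Hd0].
    destruct (kill_list (nth i D zero) D HQd Hd0) as [t [Ht1 Ht2]].
    exists t. intros q Hq Hq0. destruct (Hcov q Hq Hq0) as [d'' [Hd''1 Hd''2]].
    destruct (HD1 _ Hd''1) as [HQd'' Hd''0].
    split; intros HE.
    - transitivity (act ko q); [|apply Hko]. apply (transfer q (nth i D zero)); auto. rewrite Hko; auto.
    - assert (HN : ~ EqB d'' (nth i D zero)) by (intro E; apply HE; apply (EqB_trans q d''); auto).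
      transitivity (act kz q); [|apply Hkz]. apply (transfer q d''); auto. rewrite Hkz; auto. }
  exists Es. rewrite HEl. fold n.
  split; [|split].
  - intros i j v Hi Hj.
    destruct (Nat.eqb i j) eqn:Eij.
    + apply Nat.eqb_eq in Eij; subst j.
      rewrite <- app_ev1. apply extension; auto using ev1_additive.
      intros q Hq. destruct (classic (q = zero)) as [->|Hq0]; [rewrite !ev1_zero; auto|].
      rewrite app_ev1. destruct (HEP i Hi q Hq Hq0) as [H1 H2].
      destruct (classic (EqB q (nth i D zero))) as [HE|HE].
      * rewrite !H1; auto.
      * rewrite H2, ev1_zero; auto.
    + apply Nat.eqb_neq in Eij.
      rewrite <- app_ev1. apply (extension _ (fun _ => zero)); auto using ev1_additive, additive_zero_fun.
      intros q Hq. destruct (classic (q = zero)) as [->|Hq0]; [rewrite !ev1_zero; auto|].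
      rewrite app_ev1. destruct (HEP j Hj q Hq Hq0) as [H1 H2].
      destruct (classic (EqB q (nth j D zero))) as [HE|HE].
      * rewrite H1 by auto. apply (HEP i Hi q Hq Hq0). intro HE'.
        apply (HD3 i j); auto. apply (EqB_trans _ q); auto. apply EqB_sym; auto.
      * rewrite H2, ev1_zero; auto.
  - assert (Hprod : forall k, exists Pt, (forall w, (forall i, i < k -> ev1 (nth i Es tzero) w = zero) ->
        ev1 Pt w = w) /\ (forall q, (exists i, i < k /\ ev1 (nth i Es tzero) q = q) -> ev1 Pt q = zero)).
    { induction k as [|k IH].
      - exists (tvar K 0); split; auto. intros q [i [Hi _]]; lia.
      - destruct IH as [Pt [HP1 HP2]].
        set (C := tadd (tvar K 0) (tact km (nth k Es tzero))).
        assert (HC : forall v, ev1 C v = add v (opp (ev1 (nth k Es tzero) v))).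
        { intros v; unfold C, ev1; simpl; rewrite Hkm; auto. }
        exists (app C Pt); split.
        + intros w Hw. rewrite app_ev1, HP1, HC, Hw, opp_zero, add0r; auto.
        + intros q [i [Hi Hiq]]. rewrite app_ev1. destruct (Nat.eq_dec i k) as [->|Hne].
          * rewrite ev1_comm, HC, Hiq, addNr, ev1_zero; auto.
          * rewrite HP2, ev1_zero; auto. exists i; split; auto; lia. }
    destruct (Hprod n) as [Pt [HP1 HP2]].
    assert (HP0 : forall v, ev1 Pt v = zero).
    { apply (extension _ (fun _ => zero)); auto using ev1_additive, additive_zero_fun.
      intros q Hq. destruct (classic (q = zero)) as [->|Hq0]; [rewrite !ev1_zero; auto|].
      apply HP2. destruct (Hcovi q Hq Hq0) as [i [Hi HE]]. exists i; split; auto.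
      apply (HEP i Hi q Hq Hq0); auto. }
    intros w Hw. rewrite <- (HP1 w Hw). auto.
  - intros rho i Hi.
    assert (Hdi : In (nth i D zero) D) by (apply nth_In; auto).
    destruct (HD1 _ Hdi) as [HQd Hd0].
    destruct (S1 _ HQd rho) as [a Ha].
    destruct (classic (nz a)) as [Hnz|Hnz].
    + right. destruct (Hinvex a Hnz) as [a' Ha'].
      exists (tact a' (tvar K 0)). intro v.
      rewrite <- !app_ev1. apply extension; auto using ev1_additive.
      intros q Hq. destruct (classic (q = zero)) as [->|Hq0]; [rewrite !ev1_zero; auto|].
      rewrite !app_ev1. destruct (HEP i Hi q Hq Hq0) as [H1 H2].
      destruct (classic (EqB q (nth i D zero))) as [HE|HE].
      * rewrite H1 by auto. rewrite (transfer q (nth i D zero) rho a); auto.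
        unfold ev1 at 1; simpl; auto.
      * rewrite H2 by auto. rewrite !ev1_zero; auto.
    + left. intro v. rewrite <- app_ev1.
      apply (extension _ (fun _ => zero)); auto using ev1_additive, additive_zero_fun.
      intros q Hq. destruct (classic (q = zero)) as [->|Hq0]; [rewrite !ev1_zero; auto|].
      rewrite app_ev1. destruct (HEP i Hi q Hq Hq0) as [H1 H2].
      destruct (classic (EqB q (nth i D zero))) as [HE|HE].
      * rewrite (transfer q (nth i D zero) rho a); auto. rewrite (not_nz a Hnz), ev1_zero; auto.
      * rewrite ev1_comm, H2, ev1_zero; auto.
Qed.

Section Elim.
Variable Es : list (term K).
Notation n := (length Es).
Definition E (i : nat) := nth i Es tzero.
Hypothesis Horth : forall i j v, i < n -> j < n ->
      ev1 (E i) (ev1 (E j) v) = if Nat.eqb i j then ev1 (E i) v else zero.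
Hypothesis Hsep0 : forall w, (forall i, i < n -> ev1 (E i) w = zero) -> w = zero.
Hypothesis Hinv : forall rho i, i < n -> (forall v, ev1 (E i) (ev1 rho v) = zero) \/
      exists rho', forall v, ev1 rho' (ev1 rho (ev1 (E i) v)) = ev1 (E i) v.

Notation ev := (eval_term add zero act).
Notation hd := (holds add zero act).

Lemma Eidem : forall i v, i < n -> ev1 (E i) (ev1 (E i) v) = ev1 (E i) v.
Proof. intros i v Hi. rewrite Horth by auto. rewrite Nat.eqb_refl; auto. Qed.

Lemma Eorth : forall i j v, i <> j -> ev1 (E i) (ev1 (E j) v) = zero.
Proof.
  intros i j v Hij.
  destruct (Nat.lt_ge_cases i n) as [Hi|Hi]; [destruct (Nat.lt_ge_cases j n) as [Hj|Hj]|].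
  - rewrite Horth by auto. apply Nat.eqb_neq in Hij; rewrite Hij; auto.
  - unfold E at 2; rewrite (nth_overflow Es tzero Hj). unfold ev1 at 2; simpl. apply ev1_zero.
  - unfold E at 1; rewrite (nth_overflow Es tzero Hi). reflexivity.
Qed.

Inductive bf : Type :=
  | BF : formula K -> bf
  | BP : nat -> term K -> bf
  | BN : bf -> bf
  | BA : bf -> bf -> bf
  | BO : bf -> bf -> bf.

Fixpoint sem (e : nat -> V) (v : V) (b : bf) : Prop :=
  match b with
  | BF a => hd e a
  | BP i T => ev1 (E i) v = ev e T
  | BN b1 => ~ sem e v b1
  | BA b1 b2 => sem e v b1 /\ sem e v b2
  | BO b1 b2 => sem e v b1 \/ sem e v b2
  end.

Fixpoint Good (b : bf) : Prop :=
  match b with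
  | BF a => quantifier_free a
  | BP i T => i < n /\ forall e, ev1 (E i) (ev e T) = ev e T
  | BN b1 => Good b1
  | BA b1 b2 | BO b1 b2 => Good b1 /\ Good b2
  end.

Fixpoint minBP (k : nat) (b : bf) : Prop :=
  match b with
  | BF _ => True
  | BP i _ => k <= i
  | BN b1 => minBP k b1
  | BA b1 b2 | BO b1 b2 => minBP k b1 /\ minBP k b2
  end.

Fixpoint toF (b : bf) : formula K :=
  match b with
  | BF a => a
  | BP _ _ => fFalse
  | BN b1 => fNot (toF b1)
  | BA b1 b2 => fAnd (toF b1) (toF b2)
  | BO b1 b2 => fOr (toF b1) (toF b2)
  end.

Lemma minBP0 : forall b, minBP 0 b.
Proof. induction b; simpl; auto; lia. Qed.

Lemma toF_ok : forall b, Good b -> minBP n b ->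
  quantifier_free (toF b) /\ forall e v, sem e v b <-> hd e (toF b).
Proof.
  induction b; simpl; intros HG HM.
  - split; auto; tauto.
  - lia.
  - destruct (IHb HG HM) as [H1 H2]; split; auto. intros; rewrite H2; tauto.
  - destruct (IHb1 (proj1 HG) (proj1 HM)) as [H1 H2], (IHb2 (proj2 HG) (proj2 HM)) as [H3 H4].
    split; auto. intros; rewrite H2, H4; tauto.
  - destruct (IHb1 (proj1 HG) (proj1 HM)) as [H1 H2], (IHb2 (proj2 HG) (proj2 HM)) as [H3 H4].
    split; auto. intros; rewrite H2, H4; tauto.
Qed.

Definition rx (x : nat) (t : term K) := tsubst (fun j => if Nat.eqb j x then tvar K 0 else tzero) t.
Definition sx (x : nat) (t : term K) := tsubst (fun j => if Nat.eqb j x then tzero else tvar K j) t.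

Lemma split_eval : forall x t e v, ev (upd e x v) t = add (ev e (sx x t)) (ev1 (rx x t) v).
Proof.
  induction t; intros e v; unfold sx, rx, ev1 in *; simpl.
  - unfold upd. destruct (Nat.eqb _ x); simpl; auto.
  - auto.
  - rewrite IHt1, IHt2, add4; auto.
  - rewrite IHt, endo; auto.
Qed.

Lemma iff_sub : forall A1 B1 A2 B2, add A1 B1 = add A2 B2 <-> add B1 (opp B2) = add A2 (opp A1).
Proof.
  intros A1 B1 A2 B2; split; intro H.
  - apply shuffle. rewrite (addC B1), (addC B2); auto.
  - assert (HB : B1 = add (add A2 (opp A1)) B2) by (rewrite <- H, <- assoc, addNl, add0r; auto).
    rewrite HB, (addC A2 (opp A1)), !assoc, addNr, add0l; auto.
Qed.

Lemma bigAnd : forall (P : nat -> (nat -> V) -> V -> Prop),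
  (forall i, i < n -> exists b, Good b /\ forall e v, sem e v b <-> P i e v) ->
  forall k, k <= n -> exists b, Good b /\ forall e v, sem e v b <-> (forall i, i < k -> P i e v).
Proof.
  intros P H k. induction k as [|k IH]; intros Hk.
  - exists (BF fTrue); simpl; split; auto. intros; split; auto; intros; lia.
  - destruct IH as [b [Hb1 Hb2]]; [lia|].
    destruct (H k) as [c [Hc1 Hc2]]; [lia|].
    exists (BA b c); simpl; split; auto. intros e v; rewrite Hb2, Hc2; split.
    + intros [H1 H2] i Hi. destruct (Nat.eq_dec i k) as [->|Hne]; auto. apply H1; lia.
    + intros H1; split; auto.
Qed.

Lemma translate_atom : forall x t1 t2, exists b, Good b /\ forall e v,
  sem e v b <-> hd (upd e x v) (fEq t1 t2).
Proof.
  intros x t1 t2. simpl.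
  set (rho := tadd (rx x t1) (tact km (rx x t2))).
  set (S := tadd (sx x t2) (tact km (sx x t1))).
  assert (Hat : forall e v, ev (upd e x v) t1 = ev (upd e x v) t2 <-> ev1 rho v = ev e S).
  { intros e v. rewrite !split_eval, iff_sub. unfold rho, S, ev1; simpl. rewrite !Hkm. tauto. }
  destruct (bigAnd (fun i e v => ev1 (E i) (ev1 rho v) = ev1 (E i) (ev e S))) with (k := n)
    as [b [Hb1 Hb2]]; auto.
  - intros i Hi. destruct (Hinv rho i Hi) as [Hz|[rho' Hr]].
    + exists (BF (fEq (app (E i) S) tzero)); simpl; split; auto.
      intros e v. rewrite app_eval, Hz. split; auto.
    + exists (BP i (app rho' (app (E i) S))); simpl; split.
      * split; auto. intros e. rewrite !app_eval, ev1_comm, Eidem; auto.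
      * intros e v. rewrite !app_eval. split; intro H.
        -- rewrite (ev1_comm (E i) rho), H, (ev1_comm rho rho'), Hr; auto.
        -- transitivity (ev1 rho' (ev1 rho (ev1 (E i) v))); [symmetry; apply Hr|].
           f_equal. rewrite (ev1_comm rho (E i)), H; auto.
  - exists b; split; auto. intros e v. rewrite Hb2, Hat. split; intro H.
    + set (w := add (ev1 rho v) (opp (ev e S))).
      apply sub_eq. apply Hsep0. intros i Hi.
      rewrite ev1_additive, ev1_opp, H, addNr; auto.
    + intros i Hi; rewrite H; auto.
Qed.

Lemma translate : forall x psi, quantifier_free psi -> exists b, Good b /\ forall e v,
  sem e v b <-> hd (upd e x v) psi.
Proof.
  intros x. induction psi; simpl; intros Hq.
  - apply translate_atom.
  - exists (BF fTrue); simpl; split; auto; tauto.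
  - exists (BF fFalse); simpl; split; auto; tauto.
  - destruct (IHpsi Hq) as [b [Hb1 Hb2]]. exists (BN b); simpl; split; auto.
    intros; rewrite Hb2; tauto.
  - destruct (IHpsi1 (proj1 Hq)) as [b [Hb1 Hb2]], (IHpsi2 (proj2 Hq)) as [c [Hc1 Hc2]].
    exists (BA b c); simpl; split; auto. intros; rewrite Hb2, Hc2; tauto.
  - destruct (IHpsi1 (proj1 Hq)) as [b [Hb1 Hb2]], (IHpsi2 (proj2 Hq)) as [c [Hc1 Hc2]].
    exists (BO b c); simpl; split; auto. intros; rewrite Hb2, Hc2; tauto.
  - destruct (IHpsi1 (proj1 Hq)) as [b [Hb1 Hb2]], (IHpsi2 (proj2 Hq)) as [c [Hc1 Hc2]].
    exists (BO (BN b) c); simpl; split; auto. intros; rewrite Hb2, Hc2.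
    destruct (classic (hd (upd e x v) psi1)); tauto.
  - contradiction.
  - contradiction.
Qed.

Fixpoint pts (i : nat) (b : bf) : list (term K) :=
  match b with
  | BF _ => []
  | BP j T => if Nat.eqb j i then [T] else []
  | BN b1 => pts i b1
  | BA b1 b2 | BO b1 b2 => pts i b1 ++ pts i b2
  end.

Fixpoint repl (i : nat) (c : option (term K)) (b : bf) : bf :=
  match b with
  | BF a => BF a
  | BP j T => if Nat.eqb j i then
                match c with Some T' => BF (fEq T' T) | None => BF fFalse end
              else BP j T
  | BN b1 => BN (repl i c b1)
  | BA b1 b2 => BA (repl i c b1) (repl i c b2)
  | BO b1 b2 => BO (repl i c b1) (repl i c b2)
  end.

Definition bigOr (l : list bf) : bf := fold_right BO (BF fFalse) l.

Lemma bigOr_sem : forall l e v, sem e v (bigOr l) <-> exists c, In c l /\ sem e v c.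
Proof.
  induction l as [|c l IH]; simpl; intros e v.
  - split; [tauto|intros [c [[] _]]].
  - rewrite IH. split.
    + intros [H|[c' [H1 H2]]]; [exists c; auto|exists c'; auto].
    + intros [c' [[<-|H1] H2]]; auto. right; exists c'; auto.
Qed.

Lemma bigOr_good : forall l, (forall c, In c l -> Good c) -> Good (bigOr l).
Proof. induction l; simpl; intros H; auto. Qed.

Lemma bigOr_min : forall k l, (forall c, In c l -> minBP k c) -> minBP k (bigOr l).
Proof. induction l; simpl; intros H; auto. Qed.

Lemma L1 : forall i b e v T, ev1 (E i) v = ev e T -> (sem e v b <-> sem e v (repl i (Some T) b)).
Proof.
  induction b; simpl; intros e v T H; try tauto.
  - destruct (Nat.eqb _ i) eqn:Eq; simpl; [|tauto].
    apply Nat.eqb_eq in Eq; subst. rewrite H; tauto.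
  - rewrite (IHb e v T H); tauto.
  - rewrite (IHb1 e v T H), (IHb2 e v T H); tauto.
  - rewrite (IHb1 e v T H), (IHb2 e v T H); tauto.
Qed.

Lemma L2 : forall i b e v, (forall T, In T (pts i b) -> ev1 (E i) v <> ev e T) ->
  (sem e v b <-> sem e v (repl i None b)).
Proof.
  induction b; simpl; intros e v H; try tauto.
  - destruct (Nat.eqb _ i) eqn:Eq; simpl; [|tauto].
    apply Nat.eqb_eq in Eq; subst. specialize (H t (or_introl eq_refl)). tauto.
  - rewrite (IHb e v H); tauto.
  - rewrite (IHb1 e v), (IHb2 e v); try tauto; intros T HT; apply H; apply in_or_app; auto.
  - rewrite (IHb1 e v), (IHb2 e v); try tauto; intros T HT; apply H; apply in_or_app; auto.
Qed.

Lemma L3 : forall i c b e v v', (forall j, j <> i -> ev1 (E j) v = ev1 (E j) v') ->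
  (sem e v (repl i c b) <-> sem e v' (repl i c b)).
Proof.
  induction b; simpl; intros e v v' H; try tauto.
  - destruct (Nat.eqb _ i) eqn:Eq; simpl.
    + destruct c; simpl; tauto.
    + apply Nat.eqb_neq in Eq. rewrite H by auto; tauto.
  - rewrite (IHb e v v' H); tauto.
  - rewrite (IHb1 e v v' H), (IHb2 e v v' H); tauto.
  - rewrite (IHb1 e v v' H), (IHb2 e v v' H); tauto.
Qed.

Lemma repl_good : forall i c b, Good b -> Good (repl i c b).
Proof.
  induction b; simpl; intros H; auto; try tauto.
  destruct (Nat.eqb _ i); simpl; auto. destruct c; simpl; auto.
Qed.

Lemma repl_min : forall k c b, minBP k b -> minBP (S k) (repl k c b).
Proof.
  induction b; simpl; intros H; auto; try tauto.
  destruct (Nat.eqb _ k) eqn:Eq; simpl; [destruct c; simpl; auto|].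
  apply Nat.eqb_neq in Eq. lia.
Qed.

Lemma pts_good : forall i b, Good b -> forall T, In T (pts i b) -> forall e, ev1 (E i) (ev e T) = ev e T.
Proof.
  induction b; simpl; intros HG T HT; try tauto.
  - destruct (Nat.eqb _ i) eqn:Eq; simpl in HT; [|tauto].
    apply Nat.eqb_eq in Eq; subst. destruct HT as [<-|[]]. tauto.
  - apply IHb; auto.
  - apply in_app_or in HT; destruct HT; [apply IHb1|apply IHb2]; tauto.
  - apply in_app_or in HT; destruct HT; [apply IHb1|apply IHb2]; tauto.
Qed.

Lemma modify : forall i v y, i < n -> ev1 (E i) y = y ->
  ev1 (E i) (add (add v (opp (ev1 (E i) v))) y) = y /\
  forall j, j <> i -> ev1 (E j) v = ev1 (E j) (add (add v (opp (ev1 (E i) v))) y).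
Proof.
  intros i v y Hi Hy. split.
  - rewrite !ev1_additive, ev1_opp, Eidem, addNr, add0l; auto.
  - intros j Hj. rewrite !ev1_additive, ev1_opp, Eorth by auto.
    rewrite <- Hy, Eorth by auto. rewrite opp_zero, !add0r; auto.
Qed.

Fixpoint InL (T : term K) (L : list (term K)) : formula K :=
  match L with
  | [] => fFalse
  | T' :: L' => fOr (fEq T T') (InL T L')
  end.

Fixpoint AL (L : list (term K)) (k : nat) : formula K :=
  match L with
  | [] => match k with 0 => fTrue | S _ => fFalse end
  | T :: L' => match k with
               | 0 => fTrue
               | S k' => fOr (fAnd (InL T L') (AL L' (S k'))) (fAnd (fNot (InL T L')) (AL L' k'))
               end
  end.

Lemma InL_sem : forall T L e, hd e (InL T L) <-> In (ev e T) (map (ev e) L).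
Proof.
  induction L as [|T' L IH]; simpl; intros e; [tauto|]. rewrite IH. split; intros [H|H]; auto.
Qed.

Lemma InL_qf : forall T L, quantifier_free (InL T L).
Proof. induction L; simpl; auto. Qed.

Lemma AL_qf : forall L k, quantifier_free (AL L k).
Proof. induction L; destruct k; simpl; auto using InL_qf. Qed.

Lemma AL_1 : forall L k e, hd e (AL L k) ->
  exists d, NoDup d /\ incl d (map (ev e) L) /\ length d = k.
Proof.
  induction L as [|T L IH]; intros k e H; destruct k as [|k]; simpl in H.
  - exists []; repeat split; auto using NoDup_nil. intros x [].
  - contradiction.
  - exists []; repeat split; auto using NoDup_nil. intros x [].
  - destruct H as [[H1 H2]|[H1 H2]].
    + destruct (IH _ _ H2) as [d [Hd1 [Hd2 Hd3]]]. exists d; repeat split; auto.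
      intros x Hx; simpl; right; auto.
    + rewrite InL_sem in H1. destruct (IH _ _ H2) as [d [Hd1 [Hd2 Hd3]]].
      exists (ev e T :: d); repeat split; simpl; auto.
      * constructor; auto.
      * intros x [<-|Hx]; simpl; auto.
Qed.

Lemma AL_2 : forall L e d, NoDup d -> incl d (map (ev e) L) -> hd e (AL L (length d)).
Proof.
  induction L as [|T L IH]; intros e d Hd Hi.
  - destruct d as [|x d]; simpl; auto. exfalso; apply (Hi x); simpl; auto.
  - destruct d as [|x d0]; [simpl; auto|].
    cbn [length AL holds]. rewrite InL_sem.
    destruct (classic (In (ev e T) (map (ev e) L))) as [HT|HT].
    + left; split; auto. change (S (length d0)) with (length (x :: d0)). apply IH; auto.
      intros y Hy. destruct (Hi y Hy) as [<-|H]; auto.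
    + right; split; auto.
      destruct (classic (In (ev e T) (x :: d0))) as [HTd|HTd].
      * destruct (in_split _ _ HTd) as [d1 [d2 Hd12]].
        assert (Hlen : length d0 = length (d1 ++ d2)).
        { assert (H : length (x :: d0) = length (d1 ++ ev e T :: d2)) by (rewrite Hd12; auto).
          simpl in H. rewrite length_app in *; simpl in H. lia. }
        rewrite Hlen. apply IH.
        -- rewrite Hd12 in Hd. eapply NoDup_remove_1; eauto.
        -- intros y Hy. assert (Hy' : In y (x :: d0)) by (rewrite Hd12; apply in_or_app;
             apply in_app_or in Hy; simpl; tauto).
           destruct (Hi y Hy') as [<-|H]; auto.
           exfalso. rewrite Hd12 in Hd. apply (NoDup_remove_2 _ _ _ Hd). auto.
      * apply IH.
        -- inversion Hd; auto.
        -- intros y Hy. destruct (Hi y (or_intror Hy)) as [<-|H]; auto.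
           exfalso; apply HTd; simpl; auto.
Qed.

Lemma nodup_filter : forall (P : V -> Prop) (Ls : list V), exists Ls', NoDup Ls' /\
  forall w, In w Ls' <-> In w Ls /\ P w.
Proof.
  intros P. induction Ls as [|a Ls IH].
  - exists []; split; [constructor|simpl; tauto].
  - destruct IH as [L' [H1 H2]].
    destruct (classic (P a /\ ~ In a L')) as [Ha|Ha].
    + exists (a :: L'); split; [constructor; tauto|].
      intros w; simpl; rewrite H2. split.
      * intros [<-|H]; tauto.
      * intros [[<-|H] HP]; tauto.
    + exists L'; split; auto. intros w; rewrite H2; simpl. split; [tauto|].
      intros [[<-|H] HP]; [|tauto]. apply NNPP; intro Hn; apply Ha; split; auto.
      intro HH; apply Hn; apply H2 in HH; tauto.
Qed.

Lemma Avoid : forall i L, (forall T, In T L -> forall e, ev1 (E i) (ev e T) = ev e T) ->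
  exists phi, quantifier_free phi /\ forall e, hd e phi <->
     exists w, ev1 (E i) w = w /\ forall T, In T L -> w <> ev e T.
Proof.
  intros i L HL.
  destruct (classic (exists Ls, forall w, ev1 (E i) w = w -> In w Ls)) as [[Ls HLs]|Hno].
  - destruct (nodup_filter (fun w => ev1 (E i) w = w) Ls) as [Lf [Hf1 Hf2]].
    exists (fNot (AL L (length Lf))); split; [simpl; apply AL_qf|].
    intros e; simpl. split.
    + intros Hn. apply NNPP; intro Hn2. apply Hn. apply AL_2; auto.
      intros w Hw. apply Hf2 in Hw. destruct Hw as [_ Hw].
      apply NNPP; intro Hnot. apply Hn2. exists w; split; auto.
      intros T HT E'. apply Hnot. rewrite E'. apply in_map; auto.
    + intros [w [Hw1 Hw2]] HA. destruct (AL_1 _ _ _ HA) as [d [Hd1 [Hd2 Hd3]]].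
      assert (Hwd : ~ In w d).
      { intro Hin. apply Hd2 in Hin. apply in_map_iff in Hin. destruct Hin as [T [HT1 HT2]].
        apply (Hw2 T HT2); auto. }
      assert (Hinc : incl (w :: d) Lf).
      { intros y [<-|Hy]; apply Hf2.
        - split; auto.
        - apply Hd2 in Hy. apply in_map_iff in Hy. destruct Hy as [T [<- HT2]].
          split; [apply HLs|]; apply HL; auto. }
      assert (Hnd : NoDup (w :: d)) by (constructor; auto).
      pose proof (NoDup_incl_length Hnd Hinc). simpl in H. lia.
  - exists fTrue; split; simpl; auto. split; auto. intros _.
    apply NNPP; intro Hn. apply Hno. exists (map (ev e) L).
    intros w Hw. apply NNPP; intro Hw2. apply Hn. exists w; split; auto.
    intros T HT E'. apply Hw2. rewrite E'. apply in_map; auto.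
Qed.

Lemma elim_block : forall i b, i < n -> Good b -> exists b', Good b' /\
  (minBP i b -> minBP (S i) b') /\ forall e, (exists v, sem e v b) <-> (exists v, sem e v b').
Proof.
  intros i b Hi HG.
  destruct (Avoid i (pts i b) (pts_good i b HG)) as [phi [Hq Hphi]].
  exists (BO (bigOr (map (fun T => repl i (Some T) b) (pts i b))) (BA (BF phi) (repl i None b))).
  split; [|split].
  - simpl; split; [|split; auto using repl_good].
    apply bigOr_good. intros c Hc. apply in_map_iff in Hc. destruct Hc as [T [<- _]].
    apply repl_good; auto.
  - intros Hm; simpl; split; [|split; auto using repl_min].
    apply bigOr_min. intros c Hc. apply in_map_iff in Hc. destruct Hc as [T [<- _]].
    apply repl_min; auto.
  - intros e; split.
    + intros [v Hv]. exists v. simpl. rewrite bigOr_sem.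
      destruct (classic (exists T, In T (pts i b) /\ ev1 (E i) v = ev e T)) as [[T [HT1 HT2]]|Hno].
      * left. exists (repl i (Some T) b); split; [apply (in_map (fun T => repl i (Some T) b)); auto|].
        apply (proj1 (L1 i b e v T HT2)); auto.
      * right. split.
        -- apply Hphi. exists (ev1 (E i) v); split; [apply Eidem; auto|].
           intros T HT E'. apply Hno; exists T; auto.
        -- apply (proj1 (L2 i b e v ltac:(intros T HT E'; apply Hno; exists T; auto))); auto.
    + intros [v Hv]. simpl in Hv. rewrite bigOr_sem in Hv.
      destruct Hv as [[c [Hc1 Hc2]]|[Hv1 Hv2]].
      * apply in_map_iff in Hc1. destruct Hc1 as [T [<- HT]].
        pose proof (pts_good i b HG T HT e) as HTf.
        destruct (modify i v (ev e T) Hi HTf) as [M1 M2].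
        exists (add (add v (opp (ev1 (E i) v))) (ev e T)).
        apply (proj2 (L1 i b _ _ T M1)). apply (proj1 (L3 i (Some T) b e v _ M2)); auto.
      * apply Hphi in Hv1. destruct Hv1 as [w [Hw1 Hw2]].
        destruct (modify i v w Hi Hw1) as [M1 M2].
        exists (add (add v (opp (ev1 (E i) v))) w).
        apply (proj2 (L2 i b _ _ ltac:(rewrite M1; auto))).
        apply (proj1 (L3 i None b e v _ M2)); auto.
Qed.

Lemma iter_elim : forall k, k <= n -> forall b, Good b -> exists b', Good b' /\ minBP k b' /\
  forall e, (exists v, sem e v b) <-> (exists v, sem e v b').
Proof.
  induction k as [|k IH]; intros Hk b HG.
  - exists b; split; auto; split; [apply minBP0|tauto].
  - destruct (IH ltac:(lia) b HG) as [b1 [H1 [H2 H3]]].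
    destruct (elim_block k b1 ltac:(lia) H1) as [b2 [H4 [H5 H6]]].
    exists b2; split; auto; split; auto. intros e; rewrite H3; auto.
Qed.

Lemma elim_formula : forall x psi, quantifier_free psi -> exists psi', quantifier_free psi' /\
  forall e, (exists v, hd (upd e x v) psi) <-> hd e psi'.
Proof.
  intros x psi Hq.
  destruct (translate x psi Hq) as [b [Hb1 Hb2]].
  destruct (iter_elim n (le_n n) b Hb1) as [b' [H1 [H2 H3]]].
  destruct (toF_ok b' H1 H2) as [Q1 Q2].
  exists (toF b'); split; auto. intros e. split.
  - intros [v Hv]. rewrite <- Hb2 in Hv. destruct (proj1 (H3 e) (ex_intro _ v Hv)) as [v' Hv'].
    apply (Q2 e v'); auto.
  - intros H. destruct (proj2 (H3 e) (ex_intro _ zero (proj2 (Q2 e zero) H))) as [v Hv].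
    exists v; apply Hb2; auto.
Qed.

End Elim.

End Alg.

Theorem mainTheorem16 (V K : Type) (add : V -> V -> V) (zero : V) (opp : V -> V)
    (act : K -> V -> V)
    (HV : is_near_vector_space add zero opp act)
    (Hcomm : commutative_F act)
    (Hblocks : finitely_many_blocks add zero act) :
  theory_has_QE add zero act.
Proof.
  destruct HV as [[Hassoc [Hid Hinv]] [Hendo [[z Hz] [[o Ho] [[m Hm] [Hbij [Hcomp [Hinvex [Hfpf Hgen]]]]]]]]].
  destruct Hblocks as [us [Hus1 Hus2]].
  assert (add0l : forall x, add zero x = x) by (intro x; apply Hid).
  assert (add0r : forall x, add x zero = x) by (intro x; apply Hid).
  assert (addNl : forall x, add (opp x) x = zero) by (intro x; apply Hinv).
  assert (addNr : forall x, add x (opp x) = zero) by (intro x; apply Hinv).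
  destruct (blocks_structure V K add zero opp act Hassoc add0l add0r addNl addNr Hendo z o m Hz Ho Hm
     Hcomp Hbij Hinvex Hfpf Hgen Hcomm us Hus1 Hus2) as [Es [H1 [H2 H3]]].
  pose proof (elim_formula V K add zero opp act Hassoc add0l add0r addNl addNr Hendo m Hm Hcomm Es
     H1 H2 H3) as Helim.
  intros phi.
  destruct (qe_core V K add zero act Helim phi) as [psi [Hq Heq]].
  apply (cleanup V K add zero act phi psi Hq Heq).
Qed.
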